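(* Let $A\subseteq\mathbb{Z}_N$ be a $B_t[N;1]$ set which contains $0$, and let $S\triangleq A\setminus\{0\}$. Then $\mathbb{Z}_N \ge \{1\} \diamond_t S$.
   Context: A subset $A\subseteq\mathbb{Z}_N$ is a $B_t[N;1]$ set if the sums of any $t$ (not necessarily distinct) elements of $A$ are all different modulo $N$, i.e., distinct multisets of $t$ elements of $A$ have distinct sums in $\mathbb{Z}_N$. For a finite Abelian group $G$, a finite set $M\subseteq\mathbb{Z}\setminus\{0\}$ and $S=\{s_1,\dots,s_n\}\subseteq G$, we write $G\ge M\diamond_t S$ (“$M$ partially $t$-splits $G$ with splitter set $S$”) if the elements $\mathbf{e}\cdot(s_1,\dots,s_n)=\sum_i e_is_i$, over all $\mathbf{e}\in(M\cup\{0\})^n$ with $1\le\mathrm{wt}(\mathbf{e})\le t$, are all distinct and non-zero in $G$. Here $e_is_i$ denotes the $e_i$-fold group multiple and $\mathrm{wt}$ is the Hamming weight. *)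

(* Defs.v *)
From HB Require Import structures.
From mathcomp Require Import all_boot all_order all_algebra.
Set Implicit Arguments. Unset Strict Implicit. Unset Printing Implicit Defensive.
Import GRing.Theory.
Local Open Scope ring_scope.

(* A is a B_t[N;1] set in G (used with G = 'Z_N): the sums of any t
   (not necessarily distinct) elements of A are all different, i.e. two
   t-tuples of elements of A with equal sums are permutations of each other
   (= equal as multisets). *)
Definition Bt_set (G : finZmodType) (t : nat) (A : {set G}) : Prop :=
  forall x y : t.-tuple G,
    all (fun a => a \in A) x -> all (fun a => a \in A) y ->
    \sum_(a <- x) a = \sum_(a <- y) a -> perm_eq x y.

(* Coefficient vectors e indexed by the elements of S, with entries in
   M ∪ {0}; encoded as functions G -> int vanishing outside S. *)
Definition coef_vec (G : finZmodType) (M : seq int) (S : {set G})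
    (e : {ffun G -> int}) : Prop :=
  (forall s, s \in S -> (e s \in M) || (e s == 0)) /\
  (forall x, x \notin S -> e x = 0).

Definition wt (G : finZmodType) (S : {set G}) (e : {ffun G -> int}) : nat :=
  #|[set s in S | e s != 0]|.

Definition dotS (G : finZmodType) (S : {set G}) (e : {ffun G -> int}) : G :=
  \sum_(s in S) s *~ e s.

Definition partial_split (G : finZmodType) (M : seq int) (t : nat)
    (S : {set G}) : Prop :=
  (forall e, coef_vec M S e -> (1 <= wt S e <= t)%N -> dotS S e != 0) /\
  (forall e e', coef_vec M S e -> coef_vec M S e' ->
     (1 <= wt S e <= t)%N -> (1 <= wt S e' <= t)%N ->
     dotS S e = dotS S e' -> e = e').

(* Main.v *)
Require Import Defs.
From mathcomp Require Import all_boot all_order all_algebra.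
Import GRing.Theory.
Set Implicit Arguments. Unset Strict Implicit.

Lemma Bt_seq (G : finZmodType) t (A : {set G}) : Bt_set t A ->
  forall x y : seq G, size x = t -> size y = t ->
  all (fun a => a \in A) x -> all (fun a => a \in A) y ->
  (\sum_(a <- x) a = \sum_(a <- y) a)%R -> perm_eq x y.
Proof.
move=> hB x y sx sy ax ay e.
have := hB (tcast sx (in_tuple x)) (tcast sy (in_tuple y)).
by rewrite !val_tcast /=; apply.
Qed.

Lemma coef01 (G : finZmodType) (S : {set G}) e s :
  coef_vec [:: 1%Z] S e -> e s = (e s != 0%R)%:R%R.
Proof.
case=> h1 h2; case: (boolP (s \in S)) => sS.
  by move: (h1 s sS); rewrite in_cons in_nil orbF => /orP [] /eqP ->.
by rewrite h2.
Qed.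

Lemma dot_eq (G : finZmodType) (S : {set G}) e : coef_vec [:: 1%Z] S e ->
  dotS S e = (\sum_(s in [set s in S | e s != 0%R]) s)%R.
Proof.
move=> hc; rewrite /dotS (bigID (fun s => e s != 0%R)) /=.
rewrite [X in (_ + X)%R]big1 ?addr0; last first.
  by move=> s /andP [_]; rewrite negbK => /eqP ->.
rewrite (eq_bigl (fun s => s \in [set s in S | e s != 0%R])); last first.
  by move=> s; rewrite inE.
apply: eq_bigr => s; rewrite inE => /andP [_ h].
by rewrite (coef01 s hc) h.
Qed.

Theorem theorem8 (N t : nat) (hN : (1 < N)%N) (A : {set 'Z_N}) :
  Bt_set t A -> (0%R : 'Z_N) \in A ->
  partial_split [:: 1%Z] t (A :\ (0%R : 'Z_N)).
Proof.
move=> hB h0.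
set S := A :\ 0%R.
pose T (e : {ffun 'Z_N -> int}) := [set s in S | e s != 0%R].
pose X e := enum (T e) ++ nseq (t - #|T e|) (0%R : 'Z_N).
have sX e : (#|T e| <= t)%N -> size (X e) = t.
  by move=> h; rewrite size_cat size_nseq -cardE subnKC.
have aX e : all (fun a => a \in A) (X e).
  apply/allP => a; rewrite mem_cat mem_enum inE => /orP [].
    by rewrite /S !inE => /andP [/andP [_ ->]].
  by move/nseqP => [-> _].
have sumX e : coef_vec [:: 1%Z] S e -> (\sum_(a <- X e) a)%R = dotS S e.
  move=> hc; rewrite big_cat /= big_nseq iter_fix ?addr0 //.
  by rewrite dot_eq // big_enum.
have fX e : [seq a <- X e | a != 0%R] = enum (T e).
  rewrite filter_cat.
  have -> : [seq a <- nseq (t - #|T e|) (0%R : 'Z_N) | a != 0%R] = [::].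
    by rewrite filter_nseq eqxx.
  rewrite cats0; apply/all_filterP/allP => a; rewrite mem_enum /T /S !inE.
  by case/andP => /andP [].
split.
  move=> e hc /andP [h1 h2]; apply/eqP => hz.
  have := Bt_seq hB (sX e h2) (size_nseq t 0%R) (aX e) _ _.
  have aY : all (fun a => a \in A) (nseq t (0%R : 'Z_N)).
    by apply/allP => a /nseqP [-> _].
  move=> /(_ aY); rewrite sumX // hz big_nseq iter_fix ?addr0 // => /(_ erefl).
  move=> /(perm_filter (fun a => a != 0%R)); rewrite fX.
  have -> : [seq a <- nseq t (0%R : 'Z_N) | a != 0%R] = [::] by rewrite filter_nseq eqxx.
  move/perm_size; rewrite -cardE => hs.
  by move: h1; rewrite /wt -/(T e) hs.
move=> e e' hc hc' /andP [_ h2] /andP [_ h2'] he.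
have := Bt_seq hB (sX e h2) (sX e' h2') (aX e) (aX e').
rewrite !sumX // => /(_ he) /(perm_filter (fun a => a != 0%R)); rewrite !fX.
move/perm_mem => hm.
apply/ffunP => s.
case: (boolP (s \in S)) => sS.
  rewrite (coef01 s hc) (coef01 s hc').
  have := hm s; rewrite !mem_enum /T !inE; move: sS; rewrite /S !inE => /andP [-> ->] /= -> //.
by case: hc => _ -> //; case: hc' => _ ->.
Qed.
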